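(* Let $\mathscr{H}$ be a complex Hilbert space and let $N(\cdot)$ be a norm on $\mathbb{B}(\mathscr{H})$ which is an algebra norm ($N(XY)\leq N(X)N(Y)$ for all $X,Y$) and self-adjoint ($N(X^* )=N(X)$ for all $X$). Then for every $T\in\mathbb{B}(\mathscr{H})$, $$\frac1{16}N(T^*T+TT^* )+\frac12\max\{N(\Re T),N(\Im T)\}\,|N(\Re T+\Im T)-N(\Re T-\Im T)|\leq w_N^2(T).$$
   Context: For $T\in\mathbb{B}(\mathscr{H})$: $\Re(T)=\frac12(T+T^* )$, $\Im(T)=\frac1{2i}(T-T^* )$, and $w_N(T)=\sup_{\theta\in\mathbb{R}}N(\Re(e^{i\theta}T))$. *)

(* Defs.v *)
From mathcomp Require Import all_boot all_order all_algebra.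
From mathcomp Require Import all_classical all_reals all_analysis.
From mathcomp Require Export complex.
Import GRing.Theory Num.Theory.
Local Open Scope ring_scope.
Local Open Scope complex_scope.
Local Open Scope classical_set_scope.

Set Implicit Arguments.
Unset Strict Implicit.
Unset Printing Implicit Defensive.

Section Hilbert.
Variables (R : realType) (V : lmodType R[i]) (ip : V -> V -> R[i]).

Definition cabs (a : R[i]) : R := complex.Re `|a|.

Definition hnorm (x : V) : R := Num.sqrt (complex.Re (ip x x)).

Definition is_hilbert : Prop :=
  [/\ (forall (a : R[i]) (x y z : V), ip (a *: x + y) z = a * ip x z + ip y z),
      (forall x y : V, ip y x = (ip x y)^*),
      (forall x : V, 0 <= ip x x),
      (forall x : V, ip x x = 0 -> x = 0)
    & (forall u : nat -> V,
         (forall e : R, 0 < e -> exists M : nat, forall m n : nat,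
              (M <= m)%N -> (M <= n)%N -> hnorm (u m - u n) < e) ->
         exists v : V, forall e : R, 0 < e -> exists M : nat, forall n : nat,
              (M <= n)%N -> hnorm (u n - v) < e)].

Definition bounded_op (T : V -> V) : Prop :=
  (forall (a : R[i]) (x y : V), T (a *: x + y) = a *: T x + T y) /\
  exists M : R, forall x : V, hnorm (T x) <= M * hnorm x.

Definition is_adjoint (T S : V -> V) : Prop :=
  forall x y : V, ip (T x) y = ip x (S y).

Definition opadd (X Y : V -> V) : V -> V := fun x => X x + Y x.
Definition opsub (X Y : V -> V) : V -> V := fun x => X x - Y x.
Definition opscale (a : R[i]) (X : V -> V) : V -> V := fun x => a *: X x.
Definition opcomp (X Y : V -> V) : V -> V := fun x => X (Y x).

Definition is_norm_BH (N : (V -> V) -> R) : Prop :=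
  [/\ (forall X, bounded_op X -> (N X = 0 <-> X = (fun _ => 0))),
      (forall a X, bounded_op X -> N (opscale a X) = cabs a * N X)
    & (forall X Y, bounded_op X -> bounded_op Y -> N (opadd X Y) <= N X + N Y)].

Definition algebra_norm (N : (V -> V) -> R) : Prop :=
  forall X Y, bounded_op X -> bounded_op Y -> N (opcomp X Y) <= N X * N Y.

Definition selfadjoint_norm (N : (V -> V) -> R) : Prop :=
  forall X Xs, bounded_op X -> is_adjoint X Xs -> N Xs = N X.

Definition ReOp (T Ts : V -> V) : V -> V := opscale (2^-1) (opadd T Ts).
Definition ImOp (T Ts : V -> V) : V -> V := opscale ((2 * 'i)^-1) (opsub T Ts).

Definition expi (t : R) : R[i] := cos t +i* sin t.

(* w_N(T) = sup_theta N(Re(e^{i theta} T)); the adjoint of e^{i theta} T is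
   e^{-i theta} T^* = (e^{i theta})^* T^* *)
Definition wN (N : (V -> V) -> R) (T Ts : V -> V) : R :=
  sup [set N (ReOp (opscale (expi t) T) (opscale (expi t)^* Ts)) | t in [set: R]].

End Hilbert.

(* Main.v *)
Require Import Defs.
From mathcomp Require Import all_boot all_order all_algebra.
From mathcomp Require Import all_classical all_reals all_analysis.
From mathcomp Require Import complex.
From mathcomp Require Import ring lra.
Import Order.TTheory GRing.Theory Num.Theory.
Local Open Scope ring_scope.
Local Open Scope complex_scope.

Section Cx.
Variable R : realType.

Lemma ceq (a b : R[i]) : complex.Re a = complex.Re b -> complex.Im a = complex.Im b -> a = b.
Proof. by case: a; case: b => ? ? ? ? /= -> ->. Qed.

Lemma c2 : (2 : R[i]) = (2 : R)%:C.
Proof. by rewrite rmorph_nat. Qed.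

Lemma cinv2 : (2^-1 : R[i]) = (2^-1 : R)%:C.
Proof. by rewrite c2 fmorphV. Qed.

Lemma ki : (2 * 'i)^-1 = 0 +i* (- 2^-1) :> R[i].
Proof.
have nz : (2 * 'i : R[i]) != 0.
  rewrite mulf_eq0 negb_or; apply/andP; split; first by rewrite pnatr_eq0.
  by apply/eqP => /(congr1 (@complex.Im R)) /=; apply/eqP; rewrite oner_eq0.
apply: (mulIf nz); rewrite /= mulVf //.
rewrite c2. apply: ceq => /=; lra.
Qed.

Lemma cabsE (z : R[i]) : cabs z = Num.sqrt (complex.Re z ^+ 2 + complex.Im z ^+ 2).
Proof. by rewrite /cabs normc_def. Qed.

Lemma cabsR (x : R) : cabs x%:C = `|x|.
Proof. by rewrite cabsE /= expr0n addr0 sqrtr_sqr. Qed.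

Lemma cabs_he t : cabs ((2^-1 : R)%:C * expi t) = 2^-1 /\ cabs ((2^-1 : R)%:C * (expi t)^*) = 2^-1.
Proof.
have := cos2Dsin2 t => e.
split; rewrite cabsE /=.
  have -> : (2^-1 * cos t - 0 * sin t) ^+ 2 + (2^-1 * sin t + 0 * cos t) ^+ 2 = (2^-1) ^+ 2.
    nra.
  by rewrite sqrtr_sqr ger0_norm.
have -> : (2^-1 * cos t - 0 * - sin t) ^+ 2 + (2^-1 * - sin t + 0 * cos t) ^+ 2 = (2^-1) ^+ 2.
  nra.
by rewrite sqrtr_sqr ger0_norm.
Qed.
End Cx.

Section H.
Variables (R : realType) (V : lmodType R[i]) (ip : V -> V -> R[i]).
Hypothesis hH : is_hilbert ip.

Lemma ip_lin a x y z : ip (a *: x + y) z = a * ip x z + ip y z.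
Proof. by case: hH. Qed.
Lemma ip_sym x y : ip y x = (ip x y)^*.
Proof. by case: hH. Qed.
Lemma ip_pos x : 0 <= ip x x.
Proof. by case: hH. Qed.
Lemma ip_def x : ip x x = 0 -> x = 0.
Proof. by case: hH => _ _ _ H _; apply: H. Qed.

Lemma ip0l z : ip 0 z = 0.
Proof.
have := ip_lin 1 0 0 z; rewrite scale1r addr0 mul1r.
by move/(congr1 (fun t => t - ip 0 z)); rewrite subrr addrK => <-.
Qed.
Lemma ipDl x y z : ip (x + y) z = ip x z + ip y z.
Proof. by rewrite -[x]scale1r ip_lin mul1r scale1r. Qed.
Lemma ipZl a x z : ip (a *: x) z = a * ip x z.
Proof. by rewrite -[a *: x]addr0 ip_lin ip0l addr0. Qed.
Lemma ipDr x y z : ip x (y + z) = ip x y + ip x z.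
Proof. by rewrite [ip x y]ip_sym [ip x z]ip_sym [ip x (y + z)]ip_sym ipDl rmorphD. Qed.
Lemma ipZr a x y : ip x (a *: y) = a^* * ip x y.
Proof. by rewrite [ip x y]ip_sym [ip x (a *: y)]ip_sym ipZl rmorphM. Qed.

Lemma Re_conj (z : R[i]) : complex.Re (z^*) = complex.Re z.
Proof. by case: z. Qed.
Lemma Re_realM (c : R) (z : R[i]) : complex.Re (c%:C * z) = c * complex.Re z.
Proof. case: z => a b /=; lra. Qed.

Lemma Re_ip_ge0 x : 0 <= complex.Re (ip x x).
Proof. by have := ip_pos x; rewrite lecE /= => /andP[]. Qed.

Lemma hnorm_ge0 x : 0 <= hnorm ip x.
Proof. exact: sqrtr_ge0. Qed.
Lemma hnorm_sq x : hnorm ip x ^+ 2 = complex.Re (ip x x).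
Proof. by rewrite sqr_sqrtr // Re_ip_ge0. Qed.

Lemma ip_expand x y (c : R) :
  complex.Re (ip (x + c%:C *: y) (x + c%:C *: y)) =
  complex.Re (ip x x) + 2 * c * complex.Re (ip x y) + c ^+ 2 * complex.Re (ip y y).
Proof.
rewrite !ipDl !ipDr !ipZl !ipZr (ip_sym x y).
move: (ip x x) (ip x y) (ip y y) => [a b] [d e] [f g] /=; ring.
Qed.

Lemma ip_cs x y (k : R) :
  2 * k * complex.Re (ip x y) <= hnorm ip x ^+ 2 + k ^+ 2 * hnorm ip y ^+ 2.
Proof.
have := Re_ip_ge0 (x + (- k)%:C *: y); rewrite ip_expand !hnorm_sq; lra.
Qed.

Lemma hnormD2 x y : hnorm ip (x + y) ^+ 2 <= 2 * (hnorm ip x ^+ 2 + hnorm ip y ^+ 2).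
Proof.
have := ip_expand x y 1; rewrite scale1r.
have := ip_cs x y 1; rewrite !hnorm_sq; lra.
Qed.

Lemma hnormZ2 a x :
  hnorm ip (a *: x) ^+ 2 = (complex.Re a ^+ 2 + complex.Im a ^+ 2) * hnorm ip x ^+ 2.
Proof.
rewrite !hnorm_sq ipZl ipZr.
have := ger0_Im (ip_pos x).
case: (ip x x) => p q /= ->; case: a => a1 a2 /=; lra.
Qed.

Lemma sq_le (a b : R) : 0 <= b -> a ^+ 2 <= b ^+ 2 -> a <= b.
Proof. move=> hb hab; rewrite leNgt; apply/negP => hlt; nra. Qed.

Lemma bnd_norm X : bounded_op ip X ->
  exists M, 0 <= M /\ forall x, hnorm ip (X x) <= M * hnorm ip x.
Proof.
case=> _ [M HM]; exists `|M|; split => // x.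
apply: (le_trans (HM x)); apply: ler_wpM2r; first exact: hnorm_ge0.
exact: ler_norm.
Qed.

Lemma bounded_opadd X Y : bounded_op ip X -> bounded_op ip Y -> bounded_op ip (opadd X Y).
Proof.
move=> hX hY; split.
  move=> a x y; rewrite /opadd; case: hX => -> _; case: hY => -> _.
  by rewrite scalerDr addrACA.
have [M1 [M1p H1]] := bnd_norm _ hX; have [M2 [M2p H2]] := bnd_norm _ hY.
exists (2 * (M1 + M2)) => x; rewrite /opadd.
apply: sq_le; first by have := hnorm_ge0 x; nra.
apply: (le_trans (hnormD2 _ _)).
have h0 := hnorm_ge0 x; have a0 := hnorm_ge0 (X x); have b0 := hnorm_ge0 (Y x).
have := H1 x; have := H2 x; nra.
Qed.

Lemma bounded_opscale a X : bounded_op ip X -> bounded_op ip (opscale a X).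
Proof.
move=> hX; split.
  move=> b x y; rewrite /opscale; case: hX => -> _.
  by rewrite scalerDr !scalerA mulrC.
have [M [Mp H]] := bnd_norm _ hX.
exists ((1 + complex.Re a ^+ 2 + complex.Im a ^+ 2) * M) => x; rewrite /opscale.
have h0 := hnorm_ge0 x; have a0 := hnorm_ge0 (X x).
apply: sq_le.
  apply: mulr_ge0 => //; apply: mulr_ge0 => //.
  have := sqr_ge0 (complex.Re a); have := sqr_ge0 (complex.Im a); lra.
rewrite hnormZ2.
have := sqr_ge0 (complex.Re a); have := sqr_ge0 (complex.Im a).
set K := complex.Re a ^+ 2 + complex.Im a ^+ 2.
have := H x => hx hr hi.
have e1 : hnorm ip (X x) ^+ 2 <= (M * hnorm ip x) ^+ 2 by nra.
have e2 : K <= (1 + complex.Re a ^+ 2 + complex.Im a ^+ 2) ^+ 2 by rewrite /K; nra.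
have : 0 <= (M * hnorm ip x) ^+ 2 by nra.
rewrite exprMn in e2 *. nra.
Qed.

Lemma bounded_opcomp X Y : bounded_op ip X -> bounded_op ip Y -> bounded_op ip (opcomp X Y).
Proof.
move=> hX hY; split.
  by move=> a x y; rewrite /opcomp; case: hY => -> _; case: hX => -> _.
have [M1 [M1p H1]] := bnd_norm _ hX; have [M2 [M2p H2]] := bnd_norm _ hY.
exists (M1 * M2) => x; rewrite /opcomp.
apply: (le_trans (H1 _)); rewrite -mulrA; apply: ler_wpM2l => //; exact: H2.
Qed.

Variables (T Ts : V -> V).
Hypothesis hT : bounded_op ip T.
Hypothesis hTs : is_adjoint ip T Ts.

Lemma ipBr x y z : ip x (y - z) = ip x y - ip x z.
Proof.
have ip0r : ip x 0 = 0 by rewrite ip_sym ip0l rmorph0.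
have : ip x (z + - z) = ip x z + ip x (- z) by rewrite ipDr.
rewrite subrr ip0r => /eqP; rewrite eq_sym addr_eq0 => /eqP H.
by rewrite ipDr H opprK.
Qed.

Lemma adj_lin a x y : Ts (a *: x + y) = a *: Ts x + Ts y.
Proof.
set d := Ts (a *: x + y) - (a *: Ts x + Ts y).
have hz : forall z, ip z d = 0.
  move=> z; rewrite ipBr -hTs ipDr ipZr ipDr ipZr -!hTs.
  by rewrite subrr.
by apply/eqP; rewrite -subr_eq0; apply/eqP; apply: ip_def; apply: hz.
Qed.

Lemma adj_bounded : bounded_op ip Ts.
Proof.
split; first exact: adj_lin.
have [M [Mp HM]] := bnd_norm _ hT.
pose L := M + 1.
have Lp : 0 < L by rewrite /L; lra.
exists (2 * L) => y.
set s := hnorm ip (Ts y); set r := hnorm ip y.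
have s0 : 0 <= s := hnorm_ge0 _.
have r0 : 0 <= r := hnorm_ge0 _.
have key := ip_cs (T (Ts y)) y (2 * L ^+ 2).
rewrite hTs -hnorm_sq -/s -/r in key.
have hu : hnorm ip (T (Ts y)) <= L * s.
  apply: (le_trans (HM _)); rewrite -/s /L; nra.
have hu0 := hnorm_ge0 (T (Ts y)).
have hu2 : hnorm ip (T (Ts y)) ^+ 2 <= L ^+ 2 * s ^+ 2 by rewrite -exprMn; nra.
have e : L ^+ 2 * (3 * s ^+ 2 - 4 * L ^+ 2 * r ^+ 2) <= 0 by nra.
have L2 : 0 < L ^+ 2 by rewrite exprn_gt0.
have e2 : 3 * s ^+ 2 - 4 * L ^+ 2 * r ^+ 2 <= 0.
  by move: e; rewrite pmulr_rle0.
apply: sq_le; first by nra.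
nra.
Qed.

Lemma bounded_opsub X Y : bounded_op ip X -> bounded_op ip Y -> bounded_op ip (opsub X Y).
Proof.
move=> hX hY.
have -> : opsub X Y = opadd X (opscale (-1) Y).
  by apply: funext => v; rewrite /opsub /opadd /opscale scaleN1r.
by apply: bounded_opadd => //; apply: bounded_opscale.
Qed.

Lemma linZ (F : V -> V) : (forall a x y, F (a *: x + y) = a *: F x + F y) ->
  forall a x, F (a *: x) = a *: F x.
Proof.
move=> hF a x.
have F0 : F 0 = 0.
  have := hF 1 0 0; rewrite scale1r addr0 scale1r.
  by move/(congr1 (fun t => t - F 0)); rewrite subrr addrK => <-.
by rewrite -[a *: x]addr0 hF F0 addr0.
Qed.

Definition Lop (a b : R[i]) : V -> V := fun v => a *: T v + b *: Ts v.
Definition Qop (a1 a2 a3 a4 : R[i]) : V -> V :=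
  fun v => a1 *: T (T v) + a2 *: T (Ts v) + a3 *: Ts (T v) + a4 *: Ts (Ts v).

Lemma Lop_bnd a b : bounded_op ip (Lop a b).
Proof. change (bounded_op ip (opadd (opscale a T) (opscale b Ts))).
by apply: bounded_opadd; apply: bounded_opscale => //; exact: adj_bounded. Qed.

Lemma ReOp_L : ReOp T Ts = Lop (2^-1) (2^-1).
Proof. by apply: funext => v; rewrite /ReOp /opscale /opadd /Lop scalerDr. Qed.

Lemma ImOp_L : ImOp T Ts = Lop ((2 * 'i)^-1) (- (2 * 'i)^-1).
Proof. by apply: funext => v; rewrite /ImOp /opscale /opsub /Lop scalerBr scaleNr. Qed.

Lemma ReOpt_L e : ReOp (opscale e T) (opscale e^* Ts) = Lop (2^-1 * e) (2^-1 * e^*).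
Proof. by apply: funext => v; rewrite /ReOp /opscale /opadd /Lop scalerDr !scalerA. Qed.

Lemma Lop_add a b c d : opadd (Lop a b) (Lop c d) = Lop (a + c) (b + d).
Proof. by apply: funext => v; rewrite /opadd /Lop !scalerDl addrACA. Qed.

Lemma Lop_sub a b c d : opsub (Lop a b) (Lop c d) = Lop (a - c) (b - d).
Proof. by apply: funext => v; rewrite /opsub /Lop !scalerBl opprD addrACA. Qed.

Lemma Lop_scale k a b : opscale k (Lop a b) = Lop (k * a) (k * b).
Proof. by apply: funext => v; rewrite /opscale /Lop scalerDr !scalerA. Qed.

Lemma Lop_comp a b c d : opcomp (Lop a b) (Lop c d) = Qop (a * c) (a * d) (b * c) (b * d).
Proof.
apply: funext => v; rewrite /opcomp /Lop /Qop.
case: hT => hl _; rewrite hl adj_lin !scalerDr !scalerA.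
by rewrite (linZ _ hl) (linZ _ adj_lin) !scalerA addrA.
Qed.

Lemma Qop_add a1 a2 a3 a4 b1 b2 b3 b4 :
  opadd (Qop a1 a2 a3 a4) (Qop b1 b2 b3 b4) = Qop (a1 + b1) (a2 + b2) (a3 + b3) (a4 + b4).
Proof.
apply: funext => v; rewrite /opadd /Qop !scalerDl.
rewrite addrACA; congr (_ + _); rewrite addrACA; congr (_ + _); exact: addrACA.
Qed.

Lemma Qop_scale k a1 a2 a3 a4 :
  opscale k (Qop a1 a2 a3 a4) = Qop (k * a1) (k * a2) (k * a3) (k * a4).
Proof. by apply: funext => v; rewrite /opscale /Qop !scalerDr !scalerA. Qed.

Lemma S_Q : opadd (opcomp Ts T) (opcomp T Ts) = Qop 0 1 1 0.
Proof.
by apply: funext => v; rewrite /opadd /opcomp /Qop !scale0r !scale1r add0r addr0 addrC.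
Qed.


Variable N : (V -> V) -> R.
Hypothesis hN : is_norm_BH ip N.
Hypothesis halg : algebra_norm ip N.

Let h : R[i] := (2^-1 : R)%:C.
Let k : R[i] := 0 +i* (- 2^-1).

Lemma main_ineq :
  16^-1 * N (opadd (opcomp Ts T) (opcomp T Ts))
  + 2^-1 * Num.max (N (ReOp T Ts)) (N (ImOp T Ts))
      * `| N (opadd (ReOp T Ts) (ImOp T Ts)) - N (opsub (ReOp T Ts) (ImOp T Ts)) |
  <= wN N T Ts ^+ 2.
Proof.
case: hN => hz hs ht.
have N0 : forall X, bounded_op ip X -> 0 <= N X.
  move=> X hX.
  have hb : bounded_op ip (opadd X (opscale (-1) X)).
    by apply: bounded_opadd => //; apply: bounded_opscale.
  have e : opadd X (opscale (-1) X) = (fun _ => 0).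
    by apply: funext => v; rewrite /opadd /opscale scaleN1r subrr.
  have := ht X (opscale (-1) X) hX (bounded_opscale _ _ hX).
  rewrite (proj2 (hz _ hb) e) hs // -(rmorphN1 (real_complex R)) cabsR normrN normr1; lra.
have LH : forall a b, N (Lop a b) <= cabs a * N T + cabs b * N Ts.
  move=> a b; rewrite -hs // -hs; last exact: adj_bounded.
  apply: ht; apply: bounded_opscale => //; exact: adj_bounded.
set w := wN N T Ts.
have Hw : forall t, N (Lop (h * expi t) (h * (expi t)^*)) <= w.
  move=> t; rewrite /w /wN; apply: ub_le_sup; last first.
    by exists t => //; rewrite ReOpt_L cinv2.
  exists (2^-1 * N T + 2^-1 * N Ts) => _ [t' _ <-].
  rewrite ReOpt_L cinv2; apply: (le_trans (LH _ _)).
  by have [-> ->] := cabs_he _ t'.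
rewrite ReOp_L ImOp_L cinv2 ki -/h -/k.
have bh := Lop_bnd h h; have bk := Lop_bnd k (-k).
set a := N (Lop h h); set b := N (Lop k (-k)).
have a0 : 0 <= a := N0 _ bh.
have b0 : 0 <= b := N0 _ bk.
have aw : a <= w.
  have := Hw 0; congr (N _ <= _); congr Lop; apply: ceq => /=; rewrite cos0 sin0; lra.
have bw : b <= w.
  have := Hw (- (pi / 2)); congr (N _ <= _); congr Lop; apply: ceq => /=;
    rewrite cosN sinN cos_pihalf sin_pihalf; lra.
pose c := cos (pi / 4 : R).
have sc : sin (pi / 4 : R) = c.
  by rewrite /c -cosBpihalf -cosN; congr cos; lra.
have c0 : 0 < c.
  apply: cos_gt0_pihalf; have := pi_gt0 R; move=> pp; apply/andP; split; lra.
have cc : c ^+ 2 = 2^-1.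
  have := cos2Dsin2 (pi / 4 : R); rewrite sc -/c; lra.
set p := N (opadd (Lop h h) (Lop k (-k))).
set m := N (opsub (Lop h h) (Lop k (-k))).
have p0 : 0 <= p by apply: N0; apply: bounded_opadd.
have m0 : 0 <= m by apply: N0; apply: bounded_opsub.
have pw : c * p <= w.
  have := Hw (- (pi / 4)).
  have -> : Lop (h * expi (- (pi / 4))) (h * (expi (- (pi / 4)))^*) =
            opscale c%:C (opadd (Lop h h) (Lop k (-k))).
    rewrite Lop_add Lop_scale; congr Lop; apply: ceq => /=;
      rewrite cosN sinN sc -/c; lra.
  by rewrite hs ?cabsR ?gtr0_norm //; apply: bounded_opadd.
have mw : c * m <= w.
  have := Hw (pi / 4).
  have -> : Lop (h * expi (pi / 4)) (h * (expi (pi / 4))^*) =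
            opscale c%:C (opsub (Lop h h) (Lop k (-k))).
    rewrite Lop_sub Lop_scale; congr Lop; apply: ceq => /=;
      rewrite sc -/c; lra.
  by rewrite hs ?cabsR ?gtr0_norm //; apply: bounded_opsub.
have w0 : 0 <= w by lra.
have p2 : p ^+ 2 <= 2 * w ^+ 2.
  have cp0 : 0 <= c * p by apply: mulr_ge0 => //; lra.
  have : (c * p) ^+ 2 <= w ^+ 2 by rewrite !expr2; nra.
  rewrite exprMn cc; lra.
have m2 : m ^+ 2 <= 2 * w ^+ 2.
  have cp0 : 0 <= c * m by apply: mulr_ge0 => //; lra.
  have : (c * m) ^+ 2 <= w ^+ 2 by rewrite !expr2; nra.
  rewrite exprMn cc; lra.
have pw' : p <= 3 / 2 * w by nra.
have mw' : m <= 3 / 2 * w by nra.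
have eS : opadd (opcomp Ts T) (opcomp T Ts) =
    opscale (2 : R)%:C (opadd (opcomp (Lop h h) (Lop h h)) (opcomp (Lop k (-k)) (Lop k (-k)))).
  rewrite S_Q !Lop_comp Qop_add Qop_scale; congr Qop; apply: ceq => /=; lra.
have bAA : bounded_op ip (opcomp (Lop h h) (Lop h h)) by apply: bounded_opcomp.
have bBB : bounded_op ip (opcomp (Lop k (-k)) (Lop k (-k))) by apply: bounded_opcomp.
have sS : N (opadd (opcomp Ts T) (opcomp T Ts)) <= 2 * (a * a + b * b).
  rewrite eS hs; last by apply: bounded_opadd.
  rewrite cabsR ger0_norm //; apply: ler_wpM2l => //.
  apply: (le_trans (ht _ _ bAA bBB)); apply: lerD; exact: halg.
have mx : Num.max a b <= w by rewrite ge_max aw bw.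
have mx0 : 0 <= Num.max a b by rewrite le_max a0.
have dd : `|p - m| <= 3 / 2 * w by rewrite ler_norml; apply/andP; split; lra.
have dd0 : 0 <= `|p - m| by [].
have prod : Num.max a b * `|p - m| <= w * (3 / 2 * w) by apply: ler_pM.
have aa : a * a <= w * w by nra.
have bb : b * b <= w * w by nra.
rewrite expr2; lra.
Qed.

End H.

Theorem corollary2p16 (R : realType) (V : lmodType R[i]) (ip : V -> V -> R[i])
  (hH : is_hilbert ip) (N : (V -> V) -> R)
  (hN : is_norm_BH ip N) (halg : algebra_norm ip N) (hsa : selfadjoint_norm ip N)
  (T Ts : V -> V) (hT : bounded_op ip T) (hTs : is_adjoint ip T Ts) :
  16^-1 * N (opadd (opcomp Ts T) (opcomp T Ts))
  + 2^-1 * Num.max (N (ReOp T Ts)) (N (ImOp T Ts))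
      * `| N (opadd (ReOp T Ts) (ImOp T Ts)) - N (opsub (ReOp T Ts) (ImOp T Ts)) |
  <= wN N T Ts ^+ 2.
Proof. exact: (@main_ineq R V ip hH T Ts hT hTs N hN halg). Qed.
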